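(* Let $\mathcal{A}$ be a class of weakly-archimedean, linearly ordered $FL_{ew}$-algebras such that for every $n\in\omega$ some $\mathbf{A}_n\in\mathcal{A}$ is not $n$-contractive. Let $P=\{\langle \mathtt{v}_1,\mathtt{w}_1\rangle,\dots,\langle\mathtt{v}_m,\mathtt{w}_m\rangle\}$ be an instance of the Post Correspondence Problem in base $s\ge 2$, and let $y,v,w$ be distinct propositional variables. Let $\Gamma_P$ consist of the three formulas (1) $\Box y\leftrightarrow\Diamond y$; (2) $\Box\bigvee_{1\le i\le m}\Big(\big(v\leftrightarrow(\Box v)^{s^{\|\mathtt{v}_i\|}}\cdot y^{\mathtt{v}_i}\big)\wedge\big(w\leftrightarrow(\Box w)^{s^{\|\mathtt{w}_i\|}}\cdot y^{\mathtt{w}_i}\big)\Big)$; (3) $\Box\big(\Box(v\cdot w)\to(\Box v\cdot\Box w)\big)$; and let $\varphi_P=(v\leftrightarrow w)\to\big(y\vee(v\cdot w\to v\cdot w\cdot y)\big)$. Then the following are equivalent: (a) $P$ has a solution; (b) $\Gamma_P\not\vdash_{4\mathcal{K}_{\mathcal{A}}}\Box\varphi_P$; (c) $\Gamma_P\not\vdash_{\omega4\mathcal{K}_{\mathcal{A}}}\Box\varphi_P$.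
   Context: Post Correspondence Problem: an instance is a list $\langle\mathtt{v}_1,\mathtt{w}_1\rangle,\dots,\langle\mathtt{v}_m,\mathtt{w}_m\rangle$ of pairs of numbers written in some base $s\ge2$, without repetitions (for $i\ne j$, $\mathtt{v}_i\ne\mathtt{v}_j$ or $\mathtt{w}_i\ne\mathtt{w}_j$). For numbers $\mathtt{x},\mathtt{y}$ in base $s$, $\|\mathtt{y}\|$ is the number of digits of $\mathtt{y}$ in base $s$ and the concatenation is $\mathtt{xy}=\mathtt{x}\cdot s^{\|\mathtt{y}\|}+\mathtt{y}$. A solution is a sequence of indices $i_1,\dots,i_k$ with $1\le i_j\le m$ such that $\mathtt{v}_{i_1}\cdots\mathtt{v}_{i_k}=\mathtt{w}_{i_1}\cdots\mathtt{w}_{i_k}$ (concatenations). In formulas, $x^n$ denotes the $n$-fold product $x\cdot\ldots\cdot x$ for a natural number $n$ ($x^0=1$), with exponents read as natural numbers. An $FL_{ew}$-algebra is $\mathbf{A}=\langle A;\wedge,\vee,\cdot,\to,0,1\rangle$ with $\langle A;\wedge,\vee,0,1\rangle$ a bounded lattice, $\langle A;\cdot,1\rangle$ a commutative monoid, and $a\cdot b\le c$ iff $a\le b\to c$. $\mathbf{A}$ is $n$-contractive if $a^{n+1}=a^n$ for all $a$; weakly-archimedean if $a\le b^n$ for all $n\in\omega$ implies $ab=a$. Modal formulas use $\wedge,\vee,\cdot,\to,0,1,\Box,\Diamond$; $x\leftrightarrow y:=(x\to y)\cdot(y\to x)$. An $\mathbf{A}$-Kripke model $\langle W,R,e\rangle$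 has $W\ne\emptyset$, $R\subseteq W^2$, $e$ valuing variables at worlds in $A$, extended homomorphically world-wise and with $e(v,\Box\varphi)=\bigwedge_{Rvw}e(w,\varphi)$, $e(v,\Diamond\varphi)=\bigvee_{Rvw}e(w,\varphi)$; safe if these always exist. $4\mathcal{K}_{\mathcal{A}}$: safe models over algebras of $\mathcal{A}$ with transitive $R$; $\omega4\mathcal{K}_{\mathcal{A}}$: the finite ones among them. $\Gamma\vdash_{\mathcal{C}}\varphi$ means: for all $\mathfrak{M}\in\mathcal{C}$ and worlds $v$, if all formulas of $\Gamma$ take value $1$ at $v$ then so does $\varphi$. *)

(* Defs.v *)
From Stdlib Require Import List Arith PeanoNat.
Import ListNotations.

Record FLew := {
  car :> Type;
  meet : car -> car -> car;
  join : car -> car -> car;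
  mul  : car -> car -> car;
  imp  : car -> car -> car;
  zero : car;
  one  : car;
  meetC : forall a b, meet a b = meet b a;
  meetA : forall a b c, meet a (meet b c) = meet (meet a b) c;
  joinC : forall a b, join a b = join b a;
  joinA : forall a b c, join a (join b c) = join (join a b) c;
  meet_join_absorb : forall a b, meet a (join a b) = a;
  join_meet_absorb : forall a b, join a (meet a b) = a;
  zero_bottom : forall a, join zero a = a;
  one_top : forall a, meet one a = a;
  mulC : forall a b, mul a b = mul b a;
  mulA : forall a b c, mul a (mul b c) = mul (mul a b) c;
  mul1a : forall a, mul one a = a;
  (* residuation: a*b <= c iff a <= b -> c *)
  residuation : forall a b c,
    meet (mul a b) c = mul a b <-> meet a (imp b c) = a
}.

Definition fl_le (A : FLew) (a b : A) : Prop := meet A a b = a.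

Definition fl_pow (A : FLew) (a : A) (n : nat) : A := Nat.iter n (mul A a) (one A).

Definition linearly_ordered (A : FLew) : Prop :=
  forall a b : A, fl_le A a b \/ fl_le A b a.

Definition n_contractive (A : FLew) (n : nat) : Prop :=
  forall a : A, fl_pow A a (S n) = fl_pow A a n.

Definition weakly_archimedean (A : FLew) : Prop :=
  forall a b : A, (forall n, fl_le A a (fl_pow A b n)) -> mul A a b = a.

Inductive form : Type :=
| FVar : nat -> form
| FAnd : form -> form -> form
| FOr  : form -> form -> form
| FMul : form -> form -> form
| FImp : form -> form -> form
| FBot : form
| FTop : form
| FBox : form -> form
| FDia : form -> form.

Definition fiff (x y : form) : form := FMul (FImp x y) (FImp y x).
Definition fpow (x : form) (n : nat) : form := Nat.iter n (FMul x) FTop.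
Definition fbigor (l : list form) : form := fold_right FOr FBot l.

Definition is_inf (A : FLew) (S : A -> Prop) (a : A) : Prop :=
  (forall b, S b -> fl_le A a b) /\
  (forall c, (forall b, S b -> fl_le A c b) -> fl_le A c a).

Definition is_sup (A : FLew) (S : A -> Prop) (a : A) : Prop :=
  (forall b, S b -> fl_le A b a) /\
  (forall c, (forall b, S b -> fl_le A b c) -> fl_le A a c).

(* [ev] is the (unique) evaluation of all formulas in the A-Kripke model
   <W,R,e>; such an [ev] exists iff the model is safe. *)
Definition is_eval (A : FLew) (W : Type) (R : W -> W -> Prop)
  (e : nat -> W -> A) (ev : W -> form -> A) : Prop :=
  (forall v x, ev v (FVar x) = e x v) /\
  (forall v f g, ev v (FAnd f g) = meet A (ev v f) (ev v g)) /\
  (forall v f g, ev v (FOr f g) = join A (ev v f) (ev v g)) /\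
  (forall v f g, ev v (FMul f g) = mul A (ev v f) (ev v g)) /\
  (forall v f g, ev v (FImp f g) = imp A (ev v f) (ev v g)) /\
  (forall v, ev v FBot = zero A) /\
  (forall v, ev v FTop = one A) /\
  (forall v f, is_inf A (fun a => exists u, R v u /\ a = ev u f) (ev v (FBox f))) /\
  (forall v f, is_sup A (fun a => exists u, R v u /\ a = ev u f) (ev v (FDia f))).

Definition transitive_rel (W : Type) (R : W -> W -> Prop) : Prop :=
  forall a b c, R a b -> R b c -> R a c.

Definition finite_type (W : Type) : Prop := exists l : list W, forall w, In w l.

(* Gamma |-_{4K_K} phi : local consequence over safe transitive models *)
Definition entails_4K (K : FLew -> Prop) (Gamma : list form) (phi : form) : Prop :=
  forall (A : FLew), K A ->
  forall (W : Type) (R : W -> W -> Prop) (e : nat -> W -> A) (ev : W -> form -> A),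
    inhabited W -> transitive_rel W R -> is_eval A W R e ev ->
    forall v : W, (forall psi, In psi Gamma -> ev v psi = one A) -> ev v phi = one A.

Definition entails_w4K (K : FLew -> Prop) (Gamma : list form) (phi : form) : Prop :=
  forall (A : FLew), K A ->
  forall (W : Type) (R : W -> W -> Prop) (e : nat -> W -> A) (ev : W -> form -> A),
    inhabited W -> finite_type W -> transitive_rel W R -> is_eval A W R e ev ->
    forall v : W, (forall psi, In psi Gamma -> ev v psi = one A) -> ev v phi = one A.

(* number of digits of n in base s (>= 2): least k >= 1 with n < s^k *)
Fixpoint ndigits_aux (fuel s n : nat) : nat :=
  match fuel with
  | 0 => 1
  | S f => if n <? s then 1 else S (ndigits_aux f s (n / s))
  end.
Definition ndigits (s n : nat) : nat := ndigits_aux n s n.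

(* concatenation x y = x * s^||y|| + y *)
Definition nconcat (s x y : nat) : nat := x * s ^ ndigits s y + y.
Definition nconcat_list (s : nat) (l : list nat) : nat := fold_left (nconcat s) l 0.

(* P is given as the list [(v_1,w_1); ...; (v_m,w_m)]; index i is 0-based *)
Definition pcp_solution (s : nat) (P : list (nat * nat)) : Prop :=
  exists idx : list nat,
    idx <> [] /\ Forall (fun i => i < length P) idx /\
    nconcat_list s (map (fun i => fst (nth i P (0, 0))) idx) =
    nconcat_list s (map (fun i => snd (nth i P (0, 0))) idx).

Definition gammaP (s : nat) (P : list (nat * nat)) (y v w : nat) : list form :=
  [ fiff (FBox (FVar y)) (FDia (FVar y));
    FBox (fbigor (map (fun p =>
      FAnd (fiff (FVar v) (FMul (fpow (FBox (FVar v)) (s ^ ndigits s (fst p)))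
                                (fpow (FVar y) (fst p))))
           (fiff (FVar w) (FMul (fpow (FBox (FVar w)) (s ^ ndigits s (snd p)))
                                (fpow (FVar y) (snd p))))) P));
    FBox (FImp (FBox (FMul (FVar v) (FVar w))) (FMul (FBox (FVar v)) (FBox (FVar w)))) ].

Definition phiP (y v w : nat) : form :=
  FImp (fiff (FVar v) (FVar w))
       (FOr (FVar y) (FImp (FMul (FVar v) (FVar w))
                           (FMul (FMul (FVar v) (FVar w)) (FVar y)))).

(* Main.v *)
Require Import Defs.
From Stdlib Require Import List Arith PeanoNat.
From Stdlib Require Import Lia Classical Eqdep_dec Bool.
Import ListNotations.


Lemma meet_idem (A:FLew) a : meet A a a = a.
Proof. transitivity (meet A a (join A a (meet A a a))).
  now rewrite join_meet_absorb. apply meet_join_absorb. Qed.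

Lemma le_refl' (A:FLew) a : fl_le A a a.
Proof. apply meet_idem. Qed.

Lemma le_trans' (A:FLew) a b c : fl_le A a b -> fl_le A b c -> fl_le A a c.
Proof. unfold fl_le; intros Hab Hbc. rewrite <- Hab at 1. rewrite <- meetA. rewrite Hbc. exact Hab. Qed.

Lemma le_antisym (A:FLew) a b : fl_le A a b -> fl_le A b a -> a = b.
Proof. unfold fl_le; intros Hab Hba. rewrite <- Hab, meetC; exact Hba. Qed.

Lemma meet_lb1 (A:FLew) a b : fl_le A (meet A a b) a.
Proof. unfold fl_le. rewrite meetC, meetA, meet_idem. reflexivity. Qed.

Lemma meet_lb2 (A:FLew) a b : fl_le A (meet A a b) b.
Proof. unfold fl_le. rewrite <- meetA, meet_idem. reflexivity. Qed.

Lemma meet_glb (A:FLew) a b c : fl_le A c a -> fl_le A c b -> fl_le A c (meet A a b).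
Proof. unfold fl_le; intros H1 H2. rewrite meetA, H1, H2. reflexivity. Qed.

Lemma le_one (A:FLew) a : fl_le A a (one A).
Proof. unfold fl_le. rewrite meetC. apply one_top. Qed.

Lemma zero_le (A:FLew) a : fl_le A (zero A) a.
Proof. unfold fl_le. rewrite <- (zero_bottom A a) at 1. apply meet_join_absorb. Qed.

Lemma le_join (A:FLew) a b : fl_le A a b <-> join A a b = b.
Proof. unfold fl_le; split; intro H.
  - rewrite <- H. rewrite joinC, meetC. apply join_meet_absorb.
  - rewrite <- H. apply meet_join_absorb. Qed.

Lemma join_ub1 (A:FLew) a b : fl_le A a (join A a b).
Proof. apply meet_join_absorb. Qed.

Lemma join_ub2 (A:FLew) a b : fl_le A b (join A a b).
Proof. rewrite joinC. apply meet_join_absorb. Qed.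

Lemma join_lub (A:FLew) a b c : fl_le A a c -> fl_le A b c -> fl_le A (join A a b) c.
Proof. rewrite !le_join. intros H1 H2. rewrite <- joinA, H2, H1. reflexivity. Qed.

Lemma one_le_eq (A:FLew) a : fl_le A (one A) a -> a = one A.
Proof. intro H. apply le_antisym; auto using le_one. Qed.

Lemma res1 (A:FLew) a b c : fl_le A (mul A a b) c -> fl_le A a (imp A b c).
Proof. apply residuation. Qed.

Lemma res2 (A:FLew) a b c : fl_le A a (imp A b c) -> fl_le A (mul A a b) c.
Proof. apply residuation. Qed.

Lemma mul_mono_l (A:FLew) a a' b : fl_le A a a' -> fl_le A (mul A a b) (mul A a' b).
Proof. intro H. apply res2. eapply le_trans'. exact H. apply res1. apply le_refl'. Qed.

Lemma mul_mono_r (A:FLew) a b b' : fl_le A b b' -> fl_le A (mul A a b) (mul A a b').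
Proof. intro H. rewrite (mulC A a b), (mulC A a b'). now apply mul_mono_l. Qed.

Lemma mul_mono (A:FLew) a a' b b' : fl_le A a a' -> fl_le A b b' -> fl_le A (mul A a b) (mul A a' b').
Proof. intros H1 H2. eapply le_trans'. apply mul_mono_l; exact H1. now apply mul_mono_r. Qed.

Lemma mul_a1 (A:FLew) a : mul A a (one A) = a.
Proof. rewrite mulC. apply mul1a. Qed.

Lemma mul_le_l (A:FLew) a b : fl_le A (mul A a b) a.
Proof. rewrite <- (mul_a1 A a) at 2. apply mul_mono_r, le_one. Qed.

Lemma mul_le_r (A:FLew) a b : fl_le A (mul A a b) b.
Proof. rewrite mulC. apply mul_le_l. Qed.

Lemma imp_one_iff (A:FLew) a b : imp A a b = one A <-> fl_le A a b.
Proof. split; intro H.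
  - rewrite <- (mul1a A a). apply res2. rewrite H. apply le_refl'.
  - apply one_le_eq. apply res1. now rewrite mul1a. Qed.

Lemma mp (A:FLew) a b : fl_le A (mul A (imp A a b) a) b.
Proof. apply res2, le_refl'. Qed.

Lemma imp_one_l (A:FLew) z : imp A (one A) z = z.
Proof. apply le_antisym.
  - rewrite <- (mul_a1 A (imp A (one A) z)). apply mp.
  - apply res1. rewrite mul_a1. apply le_refl'. Qed.

Lemma mul_one_inv (A:FLew) a b : mul A a b = one A -> a = one A.
Proof. intro H. apply one_le_eq. rewrite <- H. apply mul_le_l. Qed.

Lemma mul4 (A:FLew) a b c d : mul A (mul A a b) (mul A c d) = mul A (mul A a c) (mul A b d).
Proof. rewrite <- !mulA. f_equal. rewrite !mulA. f_equal. apply mulC. Qed.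

Lemma join_lin (A:FLew) (Hl : linearly_ordered A) a b : join A a b = one A -> a = one A \/ b = one A.
Proof. intro H. destruct (Hl a b) as [H1|H1].
  - right. apply le_join in H1. congruence.
  - left. apply le_join in H1. rewrite joinC in H1. congruence. Qed.

Lemma not_le_lt (A:FLew) (Hl : linearly_ordered A) a b : ~ fl_le A a b -> fl_le A b a.
Proof. intro H. destruct (Hl a b); tauto. Qed.

Lemma pow_S (A:FLew) c n : fl_pow A c (S n) = mul A c (fl_pow A c n).
Proof. reflexivity. Qed.

Lemma pow_0 (A:FLew) c : fl_pow A c 0 = one A.
Proof. reflexivity. Qed.

Lemma pow_add (A:FLew) c m n : fl_pow A c (m + n) = mul A (fl_pow A c m) (fl_pow A c n).
Proof. induction m; simpl Nat.add.
  - rewrite pow_0, mul1a. reflexivity.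
  - rewrite !pow_S, IHm, mulA. reflexivity. Qed.

Lemma pow_mul (A:FLew) c m n : fl_pow A c (m * n) = fl_pow A (fl_pow A c m) n.
Proof. induction n.
  - rewrite Nat.mul_0_r. reflexivity.
  - rewrite Nat.mul_succ_r, pow_add, IHn, pow_S, mulC. reflexivity. Qed.

Lemma pow_le1 (A:FLew) c n : fl_le A (fl_pow A c n) (one A).
Proof. apply le_one. Qed.

Lemma pow_anti (A:FLew) c m n : m <= n -> fl_le A (fl_pow A c n) (fl_pow A c m).
Proof. intro H. replace n with (m + (n - m)) by lia. rewrite pow_add. apply mul_le_l. Qed.

Lemma pow_le_self (A:FLew) x k : 1 <= k -> fl_le A (fl_pow A x k) x.
Proof. intro H. destruct k. lia. rewrite pow_S. apply mul_le_l. Qed.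

Lemma pow_one_base (A:FLew) n : fl_pow A (one A) n = one A.
Proof. induction n. reflexivity. rewrite pow_S, IHn, mul1a. reflexivity. Qed.

Lemma pow_1 (A:FLew) c : fl_pow A c 1 = c.
Proof. rewrite pow_S, pow_0, mul_a1. reflexivity. Qed.

Lemma inf_le (A:FLew) S a x : is_inf A S a -> S x -> fl_le A a x.
Proof. intros [H _] Hx. auto. Qed.

Lemma inf_ge (A:FLew) S a x : is_inf A S a -> (forall b, S b -> fl_le A x b) -> fl_le A x a.
Proof. intros [_ H] Hx. auto. Qed.

Lemma inf_one (A:FLew) S a : is_inf A S a -> (forall b, S b -> b = one A) -> a = one A.
Proof. intros H H1. apply one_le_eq. apply (inf_ge A S). exact H. intros b Hb. rewrite (H1 b Hb). apply le_refl'. Qed.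

Lemma inf_eq (A:FLew) S a x : is_inf A S a -> S x -> (forall b, S b -> fl_le A x b) -> a = x.
Proof. intros H Hx Hl. apply le_antisym. eapply inf_le; eauto. eapply inf_ge; eauto. Qed.

Lemma sup_le (A:FLew) S a x : is_sup A S a -> S x -> fl_le A x a.
Proof. intros [H _] Hx. auto. Qed.

Lemma sup_ge (A:FLew) S a x : is_sup A S a -> (forall b, S b -> fl_le A b x) -> fl_le A a x.
Proof. intros [_ H] Hx. auto. Qed.

Lemma sup_eq (A:FLew) S a x : is_sup A S a -> S x -> (forall b, S b -> fl_le A b x) -> a = x.
Proof. intros H Hx Hl. apply le_antisym. eapply sup_ge; eauto. eapply sup_le; eauto. Qed.


Lemma ev_var A W R e ev : is_eval A W R e ev -> forall u x, ev u (FVar x) = e x u.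
Proof. intros H; apply H. Qed.
Lemma ev_and A W R e ev : is_eval A W R e ev -> forall u f g, ev u (FAnd f g) = meet A (ev u f) (ev u g).
Proof. intros H; apply H. Qed.
Lemma ev_or A W R e ev : is_eval A W R e ev -> forall u f g, ev u (FOr f g) = join A (ev u f) (ev u g).
Proof. intros H; apply H. Qed.
Lemma ev_mul A W R e ev : is_eval A W R e ev -> forall u f g, ev u (FMul f g) = mul A (ev u f) (ev u g).
Proof. intros H; apply H. Qed.
Lemma ev_imp A W R e ev : is_eval A W R e ev -> forall u f g, ev u (FImp f g) = imp A (ev u f) (ev u g).
Proof. intros H; apply H. Qed.
Lemma ev_bot A W R e ev : is_eval A W R e ev -> forall u, ev u FBot = zero A.
Proof. intros H; apply H. Qed.
Lemma ev_top A W R e ev : is_eval A W R e ev -> forall u, ev u FTop = one A.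
Proof. intros H; apply H. Qed.
Lemma ev_box A W R e ev : is_eval A W R e ev -> forall u f,
  is_inf A (fun a => exists u', R u u' /\ a = ev u' f) (ev u (FBox f)).
Proof. intros H; apply H. Qed.
Lemma ev_dia A W R e ev : is_eval A W R e ev -> forall u f,
  is_sup A (fun a => exists u', R u u' /\ a = ev u' f) (ev u (FDia f)).
Proof. intros H; apply H. Qed.

Lemma ev_fpow A W R e ev : is_eval A W R e ev -> forall u f n,
  ev u (fpow f n) = fl_pow A (ev u f) n.
Proof. intros H u f n. induction n. apply (ev_top _ _ _ _ _ H).
  simpl. rewrite (ev_mul _ _ _ _ _ H), IHn. reflexivity. Qed.

Lemma ev_fiff A W R e ev : is_eval A W R e ev -> forall u f g,
  ev u (fiff f g) = mul A (imp A (ev u f) (ev u g)) (imp A (ev u g) (ev u f)).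
Proof. intros H u f g. unfold fiff. rewrite (ev_mul _ _ _ _ _ H), !(ev_imp _ _ _ _ _ H). reflexivity. Qed.

Lemma iff_one (A:FLew) a b : mul A (imp A a b) (imp A b a) = one A <-> a = b.
Proof. split.
  - intro H. apply le_antisym; apply imp_one_iff.
    + eapply mul_one_inv. exact H.
    + rewrite mulC in H. eapply mul_one_inv. exact H.
  - intros ->. assert (imp A b b = one A) as E by (apply imp_one_iff, le_refl').
    rewrite E, mul1a. reflexivity. Qed.

Lemma ev_bigor_one A W R e ev : is_eval A W R e ev -> linearly_ordered A ->
  forall u l, ev u (fbigor l) = one A -> zero A = one A \/ exists f, In f l /\ ev u f = one A.
Proof. intros H Hl u l. induction l as [|f l IH]; simpl; intro E.
  - left. rewrite <- E. symmetry. apply (ev_bot _ _ _ _ _ H).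
  - rewrite (ev_or _ _ _ _ _ H) in E. destruct (join_lin A Hl _ _ E) as [E1|E1].
    + right. exists f. auto.
    + destruct (IH E1) as [|[g [Hg Hg']]]; auto. right. exists g; auto. Qed.

Lemma ev_bigor_in A W R e ev : is_eval A W R e ev ->
  forall u l f, In f l -> ev u f = one A -> ev u (fbigor l) = one A.
Proof. intros H u l. induction l as [|g l IH]; simpl; intros f Hin E. contradiction.
  rewrite (ev_or _ _ _ _ _ H). destruct Hin as [->|Hin].
  - rewrite E. apply one_le_eq, join_ub1.
  - rewrite (IH f Hin E). apply one_le_eq, join_ub2. Qed.

Definition Xv (s : nat) (P : list (nat*nat)) (idx : list nat) : nat :=
  nconcat_list s (map (fun i => fst (nth i P (0,0))) idx).
Definition Xw (s : nat) (P : list (nat*nat)) (idx : list nat) : nat :=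
  nconcat_list s (map (fun i => snd (nth i P (0,0))) idx).

Lemma concat_app s l m : nconcat_list s (l ++ [m]) = nconcat s (nconcat_list s l) m.
Proof. unfold nconcat_list. rewrite fold_left_app. reflexivity. Qed.

Lemma Xv_snoc s P idx i : Xv s P (idx ++ [i]) =
  Xv s P idx * s ^ ndigits s (fst (nth i P (0,0))) + fst (nth i P (0,0)).
Proof. unfold Xv. rewrite map_app. simpl. rewrite concat_app. reflexivity. Qed.

Lemma Xw_snoc s P idx i : Xw s P (idx ++ [i]) =
  Xw s P idx * s ^ ndigits s (snd (nth i P (0,0))) + snd (nth i P (0,0)).
Proof. unfold Xw. rewrite map_app. simpl. rewrite concat_app. reflexivity. Qed.

Lemma max_exists (Pn : nat -> Prop) M : (exists k, Pn k) -> (forall k, Pn k -> k < M) ->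
  exists k, Pn k /\ forall k', Pn k' -> k' <= k.
Proof.
  revert Pn. induction M; intros Pn [k Hk] Hb.
  - specialize (Hb k Hk). lia.
  - destruct (classic (Pn M)) as [HM|HM].
    + exists M. split; auto. intros k' Hk'. specialize (Hb k' Hk'). lia.
    + apply IHM. eauto. intros k' Hk'. specialize (Hb k' Hk').
      assert (k' <> M) by (intro; subst; contradiction). lia.
Qed.

Lemma core (A : FLew) (Hlin : linearly_ordered A) (W : Type) (S : W -> Prop) (R : W -> W -> Prop)
  (vv ww Bv Bw Bvw : W -> A) (c : A) (s : nat) (Hs : 1 <= s) (P : list (nat*nat)) (N : nat)
  (HSR : forall u u', S u -> R u u' -> S u')
  (HBv : forall u, S u -> is_inf A (fun a => exists u', R u u' /\ a = vv u') (Bv u))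
  (HBw : forall u, S u -> is_inf A (fun a => exists u', R u u' /\ a = ww u') (Bw u))
  (HBvw : forall u, S u -> is_inf A (fun a => exists u', R u u' /\ a = mul A (vv u') (ww u')) (Bvw u))
  (H3 : forall u, S u -> fl_le A (Bvw u) (mul A (Bv u) (Bw u)))
  (H2 : forall u, S u -> exists i, i < length P /\
        vv u = mul A (fl_pow A (Bv u) (s ^ ndigits s (fst (nth i P (0,0))))) (fl_pow A c (fst (nth i P (0,0)))) /\
        ww u = mul A (fl_pow A (Bw u) (s ^ ndigits s (snd (nth i P (0,0))))) (fl_pow A c (snd (nth i P (0,0)))))
  (H00 : forall i, i < length P -> 1 <= fst (nth i P (0,0)) + snd (nth i P (0,0)))
  (Hstrict : forall i j, i < j -> j < N -> ~ fl_le A (fl_pow A c i) (fl_pow A c j)) :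
  forall M, M <= N -> forall u, S u -> ~ fl_le A (mul A (vv u) (ww u)) (fl_pow A c M) ->
  exists idx, idx <> [] /\ Forall (fun i => i < length P) idx /\
     vv u = fl_pow A c (Xv s P idx) /\ ww u = fl_pow A c (Xw s P idx).
Proof.
  induction M as [|M IHM]; intros HM u Hu Hn.
  - exfalso. apply Hn. rewrite pow_0. apply le_one.
  - destruct (H2 u Hu) as (i & Hi & Ev & Ew).
    set (m := fst (nth i P (0,0))) in *. set (n := snd (nth i P (0,0))) in *.
    set (pp := s ^ ndigits s m) in *. set (qq := s ^ ndigits s n) in *.
    assert (Hpp : 1 <= pp) by (unfold pp; pose proof (Nat.pow_nonzero s (ndigits s m)); lia).
    assert (Hqq : 1 <= qq) by (unfold qq; pose proof (Nat.pow_nonzero s (ndigits s n)); lia).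
    assert (Hmn : 1 <= m + n) by (apply H00; exact Hi).
    assert (HVW : ~ fl_le A (mul A (Bv u) (Bw u)) (fl_pow A c M)).
    { intro Hle. apply Hn. rewrite Ev, Ew.
      eapply le_trans'. apply mul_mono; apply mul_mono_l; apply pow_le_self; eassumption.
      rewrite mul4, <- pow_add.
      eapply le_trans'. apply mul_mono. exact Hle. apply (pow_anti A c 1 (m+n)). exact Hmn.
      rewrite pow_1, mulC, <- pow_S. apply le_refl'. }
    destruct (classic (exists u', R u u')) as [Hsucc | Hnosucc].
    2: { assert (E1 : Bv u = one A).
         { eapply inf_one. apply HBv; exact Hu. intros b [u' [Hr _]]. exfalso; eauto. }
         assert (E2 : Bw u = one A).
         { eapply inf_one. apply HBw; exact Hu. intros b [u' [Hr _]]. exfalso; eauto. }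
         exists [i]. split. discriminate. split. constructor; auto.
         rewrite Ev, Ew, E1, E2, !pow_one_base, !mul1a.
         unfold Xv, Xw; simpl. unfold nconcat. simpl. split; reflexivity. }
    assert (IHs : forall u', R u u' -> exists idx, idx <> [] /\ Forall (fun i => i < length P) idx /\
       vv u' = fl_pow A c (Xv s P idx) /\ ww u' = fl_pow A c (Xw s P idx) /\ Xv s P idx + Xw s P idx < M).
    { intros u' Hr. assert (Hu' : S u') by eauto.
      assert (Hn' : ~ fl_le A (mul A (vv u') (ww u')) (fl_pow A c M)).
      { intro Hle. apply HVW. eapply le_trans'. 2: exact Hle.
        apply mul_mono; [eapply inf_le; [apply HBv; exact Hu|] | eapply inf_le; [apply HBw; exact Hu|]].
        all: exists u'; split; auto. }
      destruct (IHM ltac:(lia) u' Hu' Hn') as (idx & H1 & H2' & H3' & H4').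
      exists idx. repeat split; auto.
      destruct (Nat.lt_ge_cases (Xv s P idx + Xw s P idx) M) as [|Hge]; auto.
      exfalso. apply Hn'. rewrite H3', H4', <- pow_add. apply pow_anti. exact Hge. }
    set (Q := fun (f : list nat -> nat) k => exists u' idx, R u u' /\ idx <> [] /\
       Forall (fun i => i < length P) idx /\
       vv u' = fl_pow A c (Xv s P idx) /\ ww u' = fl_pow A c (Xw s P idx) /\
       Xv s P idx + Xw s P idx < M /\ k = f idx).
    assert (Qne : forall f, exists k, Q f k).
    { intro f. destruct Hsucc as [u' Hr]. destruct (IHs u' Hr) as (idx & ?&?&?&?&?).
      exists (f idx), u', idx. repeat split; auto. }
    assert (Qall : forall f u', R u u' -> exists idx k, Q f k /\ k = f idx /\
       vv u' = fl_pow A c (Xv s P idx) /\ ww u' = fl_pow A c (Xw s P idx)).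
    { intros f u' Hr. destruct (IHs u' Hr) as (idx & ?&?&?&?&?).
      exists idx, (f idx). split. exists u', idx. repeat split; auto. auto. }
    destruct (max_exists (Q (fun idx => Xv s P idx + Xw s P idx)) M) as (ks & Hks & Hksmax).
    { apply Qne. } { intros k (u'&idx&_&_&_&_&_&Hb&->). lia. }
    destruct (max_exists (Q (Xv s P)) M) as (k1 & Hk1 & Hk1max).
    { apply Qne. } { intros k (u'&idx&_&_&_&_&_&Hb&->). lia. }
    destruct (max_exists (Q (Xw s P)) M) as (k2 & Hk2 & Hk2max).
    { apply Qne. } { intros k (u'&idx&_&_&_&_&_&Hb&->). lia. }
    assert (EBv : Bv u = fl_pow A c k1).
    { destruct Hk1 as (u1 & idx1 & Hr1 & _ & _ & Ev1 & _ & _ & ->).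
      eapply inf_eq. apply HBv; exact Hu. exists u1. split; auto.
      intros b (u' & Hr & ->). destruct (Qall (Xv s P) u' Hr) as (idx & k & HQ & -> & Ev' & _).
      rewrite Ev'. apply pow_anti. apply Hk1max. exact HQ. }
    assert (EBw : Bw u = fl_pow A c k2).
    { destruct Hk2 as (u1 & idx1 & Hr1 & _ & _ & _ & Ew1 & _ & ->).
      eapply inf_eq. apply HBw; exact Hu. exists u1. split; auto.
      intros b (u' & Hr & ->). destruct (Qall (Xw s P) u' Hr) as (idx & k & HQ & -> & _ & Ew').
      rewrite Ew'. apply pow_anti. apply Hk2max. exact HQ. }
    destruct Hks as (us & idxs & Hrs & Hnes & Hvals & Evs & Ews & Hbs & Eks).
    assert (HBvw_ge : fl_le A (fl_pow A c ks) (Bvw u)).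
    { eapply inf_ge. apply HBvw; exact Hu.
      intros b (u' & Hr & ->). destruct (Qall (fun idx => Xv s P idx + Xw s P idx) u' Hr)
        as (idx & k & HQ & -> & Ev' & Ew').
      rewrite Ev', Ew', <- pow_add. apply pow_anti. apply Hksmax. exact HQ. }
    assert (Hx1 : Xv s P idxs <= k1).
    { apply Hk1max. exists us, idxs. repeat split; auto. }
    assert (Hx2 : Xw s P idxs <= k2).
    { apply Hk2max. exists us, idxs. repeat split; auto. }
    assert (Hk12 : k1 + k2 < M).
    { destruct (Nat.lt_ge_cases (k1 + k2) M) as [|Hge]; auto.
      exfalso. apply HVW. rewrite EBv, EBw, <- pow_add. apply pow_anti. exact Hge. }
    assert (Heq : ks = k1 + k2).
    { destruct (Nat.lt_ge_cases ks (k1 + k2)) as [Hlt|Hge]; [|lia].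
      exfalso. apply (Hstrict ks (k1 + k2) Hlt ltac:(lia)).
      eapply le_trans'. exact HBvw_ge. eapply le_trans'. apply H3; exact Hu.
      rewrite EBv, EBw, <- pow_add. apply le_refl'. }
    assert (k1 = Xv s P idxs) by lia. assert (k2 = Xw s P idxs) by lia.
    exists (idxs ++ [i]). split. destruct idxs; discriminate.
    split. apply Forall_app; split; auto.
    rewrite Ev, Ew, EBv, EBw, Xv_snoc, Xw_snoc. fold m n pp qq.
    rewrite <- !pow_mul, <- !pow_add. subst k1 k2. split; reflexivity.
Qed.

Lemma inf_ext (A:FLew) S S' x : (forall a, S a <-> S' a) -> is_inf A S x -> is_inf A S' x.
Proof. intros H [H1 H2]. split. intros b Hb. apply H1, H, Hb.
  intros c Hc. apply H2. intros b Hb. apply Hc, H, Hb. Qed.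

Lemma meet_one (A:FLew) a b : meet A a b = one A -> a = one A /\ b = one A.
Proof. intro E. split; apply one_le_eq; rewrite <- E; [apply meet_lb1|apply meet_lb2]. Qed.

Lemma min_exists (Pn : nat -> Prop) : (exists k, Pn k) -> exists n, Pn n /\ forall k, k < n -> ~ Pn k.
Proof.
  intros [k Hk]. revert Pn Hk. induction k as [k IH] using lt_wf_ind. intros Pn Hk.
  destruct (classic (exists j, j < k /\ Pn j)) as [[j [Hj Pj]]|Hno].
  - exact (IH j Hj Pn Pj).
  - exists k. split; auto. intros j Hj Pj. apply Hno; eauto.
Qed.

Lemma aux_step (A:FLew) a b t c : b = mul A a t -> fl_le A t c ->
  fl_le A (mul A (imp A a b) (mul A a b)) (mul A (mul A a b) c).
Proof. intros Hb Ht.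
  rewrite mulA. eapply le_trans'. apply mul_mono_l. apply mp.
  eapply le_trans' with (b := mul A b (mul A a t)).
  { rewrite <- Hb. apply le_refl'. }
  rewrite mulA. rewrite (mulC A b a). apply mul_mono_r. exact Ht. Qed.

Lemma phi_one_neq (A:FLew) c X Y : X <> Y ->
  imp A (mul A (imp A (fl_pow A c X) (fl_pow A c Y)) (imp A (fl_pow A c Y) (fl_pow A c X)))
        (join A c (imp A (mul A (fl_pow A c X) (fl_pow A c Y))
                         (mul A (mul A (fl_pow A c X) (fl_pow A c Y)) c))) = one A.
Proof. intro H. apply imp_one_iff. eapply le_trans'. 2: apply join_ub2. apply res1.
  destruct (Nat.lt_ge_cases X Y) as [Hlt|Hge].
  - eapply le_trans'. apply mul_mono_l, mul_le_l.
    apply aux_step with (t := fl_pow A c (Y - X)).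
    + rewrite <- pow_add. f_equal. lia.
    + rewrite <- (pow_1 A c) at 2. apply pow_anti. lia.
  - rewrite (mulC A (fl_pow A c X) (fl_pow A c Y)).
    eapply le_trans'. apply mul_mono_l, mul_le_r.
    apply aux_step with (t := fl_pow A c (X - Y)).
    + rewrite <- pow_add. f_equal. lia.
    + rewrite <- (pow_1 A c) at 2. apply pow_anti. lia.
Qed.

Lemma phi_not1 (A:FLew) a b c :
  imp A (mul A (imp A a b) (imp A b a)) (join A c (imp A (mul A a b) (mul A (mul A a b) c))) <> one A ->
  ~ fl_le A (mul A a b) (mul A (mul A a b) c).
Proof. intros H Hle. apply H. apply imp_one_iff. eapply le_trans'. 2: apply join_ub2.
  apply res1. eapply le_trans'. apply mul_le_r. exact Hle. Qed.

Lemma pow_stable (A:FLew) c i d : fl_pow A c (S i) = fl_pow A c i -> fl_pow A c (i + d) = fl_pow A c i.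
Proof. intro H. induction d. rewrite Nat.add_0_r; reflexivity.
  replace (i + S d) with (S i + d) by lia. rewrite pow_add, H, <- pow_add. exact IHd. Qed.

Lemma hard (K : FLew -> Prop)
  (HK : forall A, K A -> weakly_archimedean A /\ linearly_ordered A)
  (s : nat) (Hs : 2 <= s) (P : list (nat * nat))
  (y v w : nat) :
  ~ entails_4K K (gammaP s P y v w) (FBox (phiP y v w)) -> pcp_solution s P.
Proof.
  intro Hne. apply NNPP. intro Hns. apply Hne. clear Hne.
  intros A HA W R e ev _ Htr Hev r HG.
  destruct (HK A HA) as [Hwa Hlin].
  apply NNPP; intro Hphi.
  pose proof (HG _ (or_introl eq_refl)) as G1.
  pose proof (HG _ (or_intror (or_introl eq_refl))) as G2.
  pose proof (HG _ (or_intror (or_intror (or_introl eq_refl)))) as G3.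
  clear HG.
  set (c := ev r (FBox (FVar y))).
  assert (Hy : forall u, R r u -> ev u (FVar y) = c).
  { intros u Hr. rewrite (ev_fiff _ _ _ _ _ Hev), iff_one in G1.
    apply le_antisym.
    - unfold c; rewrite G1. eapply sup_le. apply (ev_dia _ _ _ _ _ Hev). exists u; auto.
    - eapply inf_le. apply (ev_box _ _ _ _ _ Hev). exists u; auto. }
  destruct (classic (exists u0, R r u0 /\ ev u0 (phiP y v w) <> one A)) as [[u0 [Hr0 Hp0]]|Hno].
  2: { apply Hphi. eapply inf_one. apply (ev_box _ _ _ _ _ Hev).
       intros b (u' & Hr & ->). apply NNPP. intro Hb. apply Hno. eauto. }
  set (a := ev u0 (FVar v)) in *. set (b := ev u0 (FVar w)) in *.
  assert (Hab : ~ fl_le A (mul A a b) (mul A (mul A a b) c)).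
  { apply phi_not1. rewrite <- (Hy u0 Hr0). intro E. apply Hp0.
    unfold phiP. rewrite (ev_imp _ _ _ _ _ Hev), (ev_fiff _ _ _ _ _ Hev), (ev_or _ _ _ _ _ Hev),
      (ev_imp _ _ _ _ _ Hev), !(ev_mul _ _ _ _ _ Hev). exact E. }
  assert (Hnt : zero A <> one A).
  { intro E. apply Hab. assert (forall x, x = one A) as Hall.
    { intro x. apply one_le_eq. rewrite <- E. apply zero_le. }
    rewrite (Hall (mul A (mul A a b) c)). apply le_one. }
  assert (Hex : exists n, ~ fl_le A (mul A a b) (fl_pow A c n)).
  { apply not_all_ex_not. intro Hall. apply Hab. rewrite (Hwa _ _ Hall). apply le_refl'. }
  destruct (min_exists _ Hex) as (N & HN & HNmin).
  assert (HN1 : 1 <= N).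
  { destruct N. exfalso. apply HN. apply le_one. lia. }
  assert (Hstrict : forall i j, i < j -> j < N -> ~ fl_le A (fl_pow A c i) (fl_pow A c j)).
  { intros i j Hij HjN Hle.
    assert (Es : fl_pow A c (S i) = fl_pow A c i).
    { apply le_antisym. apply pow_anti; lia.
      eapply le_trans'. exact Hle. apply pow_anti; lia. }
    assert (E1 : fl_pow A c N = fl_pow A c i).
    { replace N with (i + (N - i)) by lia. apply pow_stable; auto. }
    assert (E2 : fl_pow A c (N - 1) = fl_pow A c i).
    { replace (N - 1) with (i + (N - 1 - i)) by lia. apply pow_stable; auto. }
    apply HN. rewrite E1, <- E2. apply NNPP. apply HNmin. lia. }
  assert (H00 : forall i, i < length P -> 1 <= fst (nth i P (0,0)) + snd (nth i P (0,0))).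
  { intros i Hi. destruct (Nat.lt_ge_cases 0 (fst (nth i P (0,0)) + snd (nth i P (0,0)))) as [|Hz]. lia.
    exfalso. apply Hns. exists [i]. split. discriminate. split. constructor; auto.
    unfold nconcat_list, nconcat; simpl. lia. }
  edestruct (core A Hlin W (R r) R (fun u => ev u (FVar v)) (fun u => ev u (FVar w))
     (fun u => ev u (FBox (FVar v))) (fun u => ev u (FBox (FVar w)))
     (fun u => ev u (FBox (FMul (FVar v) (FVar w)))) c s ltac:(lia) P N)
     as (idx & Hne & Hval & Ea & Eb).
  - intros u u' H1 H2. eauto.
  - intros u _. apply (ev_box _ _ _ _ _ Hev).
  - intros u _. apply (ev_box _ _ _ _ _ Hev).
  - intros u _. eapply inf_ext. 2: apply (ev_box _ _ _ _ _ Hev).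
    intros x; split; intros (u' & Hr & ->); exists u'; split; auto;
      rewrite (ev_mul _ _ _ _ _ Hev); reflexivity.
  - intros u Hr. apply imp_one_iff.
    rewrite <- (ev_mul _ _ _ _ _ Hev), <- (ev_imp _ _ _ _ _ Hev).
    apply one_le_eq. rewrite <- G3. eapply inf_le. apply (ev_box _ _ _ _ _ Hev). exists u; auto.
  - intros u Hr.
    assert (Hb1 : ev u (fbigor (map (fun p =>
      FAnd (fiff (FVar v) (FMul (fpow (FBox (FVar v)) (s ^ ndigits s (fst p)))
                                (fpow (FVar y) (fst p))))
           (fiff (FVar w) (FMul (fpow (FBox (FVar w)) (s ^ ndigits s (snd p)))
                                (fpow (FVar y) (snd p))))) P)) = one A).
    { apply one_le_eq. rewrite <- G2. eapply inf_le. apply (ev_box _ _ _ _ _ Hev). exists u; auto. }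
    destruct (ev_bigor_one _ _ _ _ _ Hev Hlin _ _ Hb1) as [E|[f [Hf Ef]]]. contradiction.
    apply in_map_iff in Hf. destruct Hf as (p & <- & Hp).
    destruct (In_nth P p (0,0) Hp) as (i & Hi & Ei).
    exists i. rewrite Ei. split; auto.
    rewrite (ev_and _ _ _ _ _ Hev) in Ef.
    destruct (meet_one A _ _ Ef) as [L1 L2].
    rewrite (ev_fiff _ _ _ _ _ Hev), iff_one in L1, L2.
    rewrite (ev_mul _ _ _ _ _ Hev), !(ev_fpow _ _ _ _ _ Hev), (Hy u Hr) in L1, L2.
    split; assumption.
  - exact H00.
  - exact Hstrict.
  - apply Nat.le_refl.
  - exact Hr0.
  - exact HN.
  - fold a in Ea. fold b in Eb.
    destruct (Nat.eq_dec (Xv s P idx) (Xw s P idx)) as [Eq|Neq].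
    + apply Hns. exists idx. split; auto.
    + apply Hp0. unfold phiP. rewrite (ev_imp _ _ _ _ _ Hev), (ev_fiff _ _ _ _ _ Hev), (ev_or _ _ _ _ _ Hev),
      (ev_imp _ _ _ _ _ Hev), !(ev_mul _ _ _ _ _ Hev). fold a b. rewrite (Hy u0 Hr0), Ea, Eb.
      apply phi_one_neq. exact Neq.
Qed.

Definition Wt (L : nat) := {k : nat | (k <=? S L) = true}.
Definition Rt (L : nat) (x z : Wt L) : Prop := 1 <= proj1_sig z /\ proj1_sig z < proj1_sig x.

Lemma pm (L j : nat) : (Nat.min j (S L) <=? S L) = true.
Proof. apply Nat.leb_le. lia. Qed.

Definition mkW (L j : nat) : Wt L := exist _ (Nat.min j (S L)) (pm L j).

Lemma mkW_val L j : j <= S L -> proj1_sig (mkW L j) = j.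
Proof. intro H. simpl. lia. Qed.

Lemma Wt_eq L (x z : Wt L) : proj1_sig x = proj1_sig z -> x = z.
Proof. destruct x as [k H], z as [k' H']. simpl. intros ->. f_equal. apply UIP_dec, bool_dec. Qed.

Lemma Wt_bound L (x : Wt L) : proj1_sig x <= S L.
Proof. destruct x as [k H]. simpl. apply Nat.leb_le, H. Qed.

Fixpoint evf (A : FLew) (e' : nat -> nat -> A) (f : form) (k : nat) : A :=
  match f with
  | FVar x => e' x k
  | FAnd f g => meet A (evf A e' f k) (evf A e' g k)
  | FOr f g => join A (evf A e' f k) (evf A e' g k)
  | FMul f g => mul A (evf A e' f k) (evf A e' g k)
  | FImp f g => imp A (evf A e' f k) (evf A e' g k)
  | FBot => zero A
  | FTop => one A
  | FBox f => fold_right (meet A) (one A) (map (evf A e' f) (seq 1 (pred k)))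
  | FDia f => fold_right (join A) (zero A) (map (evf A e' f) (seq 1 (pred k)))
  end.

Definition evW (A : FLew) (L : nat) (e' : nat -> nat -> A) (x : Wt L) (f : form) : A :=
  evf A e' f (proj1_sig x).
Definition eW (A : FLew) (L : nat) (e' : nat -> nat -> A) (x : nat) (u : Wt L) : A :=
  e' x (proj1_sig u).

Lemma fold_inf (A : FLew) (g : nat -> A) l :
  is_inf A (fun a => exists j, In j l /\ a = g j) (fold_right (meet A) (one A) (map g l)).
Proof. induction l as [|j l IH]; simpl; split.
  - intros b (j & [] & _).
  - intros c _. apply le_one.
  - intros b (j' & [<-|Hin] & ->). apply meet_lb1. simpl.
    eapply le_trans'. apply meet_lb2. eapply inf_le. exact IH. exists j'; auto.
  - intros c Hc. apply meet_glb. apply Hc. exists j; auto.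
       eapply inf_ge. exact IH. intros b (j' & Hj & ->). apply Hc. exists j'; auto.
Qed.

Lemma fold_sup (A : FLew) (g : nat -> A) l :
  is_sup A (fun a => exists j, In j l /\ a = g j) (fold_right (join A) (zero A) (map g l)).
Proof. induction l as [|j l IH]; simpl; split.
  - intros b (j & [] & _).
  - intros c _. apply zero_le.
  - intros b (j' & [<-|Hin] & ->). apply join_ub1. simpl.
    eapply le_trans'. 2: apply join_ub2. eapply sup_le. exact IH. exists j'; auto.
  - intros c Hc. apply join_lub. apply Hc. exists j; auto.
    eapply sup_ge. exact IH. intros b (j' & Hj & ->). apply Hc. exists j'; auto.
Qed.

Lemma sup_ext (A:FLew) S S' x : (forall a, S a <-> S' a) -> is_sup A S x -> is_sup A S' x.
Proof. intros H [H1 H2]. split. intros b Hb. apply H1, H, Hb.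
  intros c Hc. apply H2. intros b Hb. apply Hc, H, Hb. Qed.

Lemma inf_ext' (A:FLew) S S' x : (forall a, S a <-> S' a) -> is_inf A S x -> is_inf A S' x.
Proof. intros H [H1 H2]. split. intros b Hb. apply H1, H, Hb.
  intros c Hc. apply H2. intros b Hb. apply Hc, H, Hb. Qed.

Lemma succ_iff (A : FLew) L e' (x : Wt L) f a :
  (exists j, In j (seq 1 (pred (proj1_sig x))) /\ a = evf A e' f j) <->
  (exists u, Rt L x u /\ a = evW A L e' u f).
Proof. pose proof (Wt_bound L x). split.
  - intros (j & Hj & ->). apply in_seq in Hj. exists (mkW L j).
    unfold Rt, evW. rewrite mkW_val by lia. split. lia. reflexivity.
  - intros (u & [H1 H2] & ->). exists (proj1_sig u). split. apply in_seq. lia. reflexivity.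
Qed.

Lemma model_eval (A : FLew) L e' : is_eval A (Wt L) (Rt L) (eW A L e') (evW A L e').
Proof. do 7 (split; [intros; reflexivity|]). split.
  - intros x f. eapply inf_ext'. 2: apply fold_inf. intro a. apply succ_iff.
  - intros x f. eapply sup_ext. 2: apply fold_sup. intro a. apply succ_iff.
Qed.

Lemma model_trans L : transitive_rel (Wt L) (Rt L).
Proof. intros a b c [H1 H2] [H3 H4]. split; lia. Qed.

Lemma model_fin L : finite_type (Wt L).
Proof. exists (map (mkW L) (seq 0 (S (S L)))). intro x.
  apply in_map_iff. exists (proj1_sig x). pose proof (Wt_bound L x). split.
  - apply Wt_eq. apply mkW_val. lia.
  - apply in_seq. lia.
Qed.

Lemma model_inh L : inhabited (Wt L).
Proof. constructor. exact (mkW L 0). Qed.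

Lemma firstn_snoc {X : Type} (l : list X) n d : n < length l -> firstn (S n) l = firstn n l ++ [nth n l d].
Proof. revert n. induction l as [|a l IH]; intros n H; simpl in H. lia.
  destruct n. reflexivity. change (a :: firstn (S n) l = (a :: firstn n l) ++ [nth n l d]). rewrite IH by lia. reflexivity. Qed.

Lemma fold_ge s (Hs : 1 <= s) l x : x <= fold_left (nconcat s) l x.
Proof. revert x. induction l as [|a l IH]; intro x; simpl. lia.
  eapply Nat.le_trans. 2: apply IH. unfold nconcat.
  pose proof (Nat.pow_nonzero s (ndigits s a)). nia. Qed.

Lemma G_mono s (Hs : 1 <= s) (g : nat -> nat) idx j j' : j <= j' ->
  nconcat_list s (map g (firstn j idx)) <= nconcat_list s (map g (firstn j' idx)).
Proof. intro H. rewrite <- (firstn_skipn j (firstn j' idx)), firstn_firstn, Nat.min_l by exact H.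
  unfold nconcat_list. rewrite map_app, fold_left_app. apply fold_ge; auto. Qed.

Lemma inf_eq' (A:FLew) S a z : is_inf A S a -> (forall b, S b -> fl_le A z b) -> (S z \/ z = one A) -> a = z.
Proof. intros H Hl [Hz|Hz]. eapply inf_eq; eauto.
  subst z. apply one_le_eq. eapply inf_ge; eauto. Qed.

Lemma easy (K : FLew -> Prop)
  (HK : forall A, K A -> weakly_archimedean A /\ linearly_ordered A)
  (Hnc : forall n : nat, exists A, K A /\ ~ n_contractive A n)
  (s : nat) (Hs : 2 <= s) (P : list (nat * nat))
  (y v w : nat) (Hyv : y <> v) (Hyw : y <> w) (Hvw : v <> w) :
  pcp_solution s P -> ~ entails_w4K K (gammaP s P y v w) (FBox (phiP y v w)).
Proof.
  intros (idx & Hne & Hval & Hsol) Hent.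
  change (Xv s P idx = Xw s P idx) in Hsol.
  set (X := Xv s P idx) in *.
  destruct (Hnc (X + X)) as (A & HA & HncA).
  destruct (HK A HA) as [_ Hlin].
  unfold n_contractive in HncA. apply not_all_ex_not in HncA. destruct HncA as [c Hc].
  set (L := length idx).
  assert (HL : 1 <= L) by (unfold L; destruct idx; [congruence| simpl; lia]).
  set (e' := fun x k => if x =? y then c else if x =? v then fl_pow A c (Xv s P (firstn k idx))
     else if x =? w then fl_pow A c (Xw s P (firstn k idx)) else one A).
  pose proof (model_eval A L e') as Hev.
  set (ev := evW A L e') in *.
  set (root := mkW L (S L)). set (uL := mkW L L).
  assert (Hroot : proj1_sig root = S L) by (apply mkW_val; lia).
  assert (HuL : proj1_sig uL = L) by (apply mkW_val; lia).
  assert (Ey : forall u, ev u (FVar y) = c).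
  { intro u. rewrite (ev_var _ _ _ _ _ Hev). unfold eW, e'. rewrite Nat.eqb_refl. reflexivity. }
  assert (Ev : forall u, ev u (FVar v) = fl_pow A c (Xv s P (firstn (proj1_sig u) idx))).
  { intro u. rewrite (ev_var _ _ _ _ _ Hev). unfold eW, e'.
    rewrite (proj2 (Nat.eqb_neq v y)) by auto. rewrite Nat.eqb_refl. reflexivity. }
  assert (Ew : forall u, ev u (FVar w) = fl_pow A c (Xw s P (firstn (proj1_sig u) idx))).
  { intro u. rewrite (ev_var _ _ _ _ _ Hev). unfold eW, e'.
    rewrite (proj2 (Nat.eqb_neq w y)) by auto. rewrite (proj2 (Nat.eqb_neq w v)) by auto.
    rewrite Nat.eqb_refl. reflexivity. }
  assert (EBv : forall u, 1 <= proj1_sig u ->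
     ev u (FBox (FVar v)) = fl_pow A c (Xv s P (firstn (pred (proj1_sig u)) idx))).
  { intros u Hu. eapply inf_eq'. apply (ev_box _ _ _ _ _ Hev).
    - intros b (u' & [H1 H2] & ->). rewrite Ev. apply pow_anti. unfold Xv. apply G_mono; lia.
    - pose proof (Wt_bound L u). destruct (Nat.eq_dec (proj1_sig u) 1) as [E1|E1].
      + right. rewrite E1. reflexivity.
      + left. exists (mkW L (pred (proj1_sig u))). rewrite Ev, mkW_val by lia.
        split; auto. unfold Rt. rewrite mkW_val by lia. lia. }
  assert (EBw : forall u, 1 <= proj1_sig u ->
     ev u (FBox (FVar w)) = fl_pow A c (Xw s P (firstn (pred (proj1_sig u)) idx))).
  { intros u Hu. eapply inf_eq'. apply (ev_box _ _ _ _ _ Hev).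
    - intros b (u' & [H1 H2] & ->). rewrite Ew. apply pow_anti. unfold Xw. apply G_mono; lia.
    - pose proof (Wt_bound L u). destruct (Nat.eq_dec (proj1_sig u) 1) as [E1|E1].
      + right. rewrite E1. reflexivity.
      + left. exists (mkW L (pred (proj1_sig u))). rewrite Ew, mkW_val by lia.
        split; auto. unfold Rt. rewrite mkW_val by lia. lia. }
  assert (HRuL : Rt L root uL) by (unfold Rt; lia).
  assert (HG : forall psi, In psi (gammaP s P y v w) -> ev root psi = one A).
  { intros psi Hin. simpl in Hin. destruct Hin as [<-|[<-|[<-|[]]]].
    - rewrite (ev_fiff _ _ _ _ _ Hev), iff_one.
      transitivity c.
      + eapply inf_eq. apply (ev_box _ _ _ _ _ Hev). exists uL. auto.
        intros b (u' & _ & ->). rewrite Ey. apply le_refl'.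
      + symmetry. eapply sup_eq. apply (ev_dia _ _ _ _ _ Hev). exists uL. auto.
        intros b (u' & _ & ->). rewrite Ey. apply le_refl'.
    - eapply inf_one. apply (ev_box _ _ _ _ _ Hev). intros b (u & [H1 H2] & ->).
      pose proof (Wt_bound L u) as Hb. rewrite Hroot in H2.
      set (t := proj1_sig u) in *.
      set (i := nth (pred t) idx 0).
      assert (Hi : i < length P).
      { rewrite Forall_forall in Hval. apply Hval. apply nth_In. unfold L in *. lia. }
      eapply ev_bigor_in. exact Hev. apply in_map_iff. exists (nth i P (0,0)). split. reflexivity.
      apply nth_In. exact Hi.
      rewrite (ev_and _ _ _ _ _ Hev), !(ev_fiff _ _ _ _ _ Hev).
      assert (Et : firstn t idx = firstn (pred t) idx ++ [i]).
      { replace t with (S (pred t)) at 1 by lia. apply firstn_snoc. unfold L in *. lia. }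
      rewrite (proj2 (iff_one A _ _)), (proj2 (iff_one A _ _)). apply one_top.
      + rewrite (ev_mul _ _ _ _ _ Hev), !(ev_fpow _ _ _ _ _ Hev), Ew, EBw, Ey by lia.
        fold t. rewrite Et, Xw_snoc, pow_add, pow_mul. reflexivity.
      + rewrite (ev_mul _ _ _ _ _ Hev), !(ev_fpow _ _ _ _ _ Hev), Ev, EBv, Ey by lia.
        fold t. rewrite Et, Xv_snoc, pow_add, pow_mul. reflexivity.
    - eapply inf_one. apply (ev_box _ _ _ _ _ Hev). intros b (u & [H1 H2] & ->).
      pose proof (Wt_bound L u) as Hb. rewrite Hroot in H2.
      rewrite (ev_imp _ _ _ _ _ Hev), imp_one_iff, (ev_mul _ _ _ _ _ Hev), EBv, EBw by lia.
      destruct (Nat.eq_dec (proj1_sig u) 1) as [E1|E1].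
      + rewrite E1. simpl. rewrite mul1a. apply le_one.
      + eapply inf_le. apply (ev_box _ _ _ _ _ Hev). exists (mkW L (pred (proj1_sig u))).
        split. unfold Rt. rewrite mkW_val by lia. lia.
        rewrite (ev_mul _ _ _ _ _ Hev), Ev, Ew, mkW_val by lia. reflexivity. }
  pose proof (Hent A HA (Wt L) (Rt L) (eW A L e') ev (model_inh L) (model_fin L) (model_trans L) Hev root HG) as Hbox.
  assert (Hphi : ev uL (phiP y v w) = one A).
  { apply one_le_eq. rewrite <- Hbox. eapply inf_le. apply (ev_box _ _ _ _ _ Hev). exists uL. auto. }
  unfold phiP in Hphi.
  rewrite (ev_imp _ _ _ _ _ Hev), (ev_fiff _ _ _ _ _ Hev), (ev_or _ _ _ _ _ Hev),
      (ev_imp _ _ _ _ _ Hev), !(ev_mul _ _ _ _ _ Hev), Ev, Ew, Ey, HuL in Hphi.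
  unfold L in Hphi. rewrite firstn_all in Hphi. fold X in Hphi. rewrite <- Hsol in Hphi. fold X in Hphi.
  rewrite (proj2 (iff_one A _ _) eq_refl), imp_one_l in Hphi.
  destruct (join_lin A Hlin _ _ Hphi) as [E|E].
  - apply Hc. rewrite E, !pow_one_base. reflexivity.
  - apply imp_one_iff in E. rewrite <- pow_add in E. apply Hc. rewrite pow_S, mulC.
    apply le_antisym. apply mul_le_l. exact E.
Qed.

Theorem proposition3p9 (K : FLew -> Prop)
  (HK : forall A, K A -> weakly_archimedean A /\ linearly_ordered A)
  (Hnc : forall n : nat, exists A, K A /\ ~ n_contractive A n)
  (s : nat) (Hs : 2 <= s) (P : list (nat * nat)) (HP : NoDup P)
  (y v w : nat) (Hyv : y <> v) (Hyw : y <> w) (Hvw : v <> w) :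
  (pcp_solution s P <-> ~ entails_4K K (gammaP s P y v w) (FBox (phiP y v w))) /\
  (pcp_solution s P <-> ~ entails_w4K K (gammaP s P y v w) (FBox (phiP y v w))).
Proof.
  split; split.
  - intros Hsol H4. apply (easy K HK Hnc s Hs P y v w Hyv Hyw Hvw Hsol).
    intros A HA W R e ev Hi Hf Ht He r HG. eapply H4; eauto.
  - apply hard; auto.
  - apply easy; auto.
  - intro Hn. apply (hard K HK s Hs P y v w). intro H4. apply Hn.
    intros A HA W R e ev Hi Hf Ht He r HG. eapply H4; eauto.
Qed.
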